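(* Let $a,\delta>0$, $n\in\mathbb{N}$, and let $J$ be an isometry-invariant kernel on $\mathbb{H}^1_L$ such that $J(L^j)\ge(a+\delta)L\log(j)L^{-2j}$ for every $j\ge n$. Then for all $k\in\mathbb{N}$ with $(a+\delta)(1-L^{-k})\ge a$ and all subsets $A\subset\Lambda_{n,n+k}$ with $|A|=\gamma L^k$, \[\mathbb{P}_J\big(A\nsim\Lambda_{n,n+2k}\setminus\Lambda_{n,n+k}\big)\le n^{-\gamma a}.\]
   Context: $\mathbb{H}^1_L$ ($L\ge2$ an integer) is the group $\bigoplus_{i=1}^\infty\mathbb{Z}/L\mathbb{Z}$ with ultrametric $\|x-y\|=L^{\max\{i:x_i\neq y_i\}}$ for $x\neq y$; $\Lambda_n(x)$ is the ball of radius $L^n$ around $x$ (an $n$-block). An isometry-invariant kernel assigns to each edge $\{x,y\}$ a weight depending only on $\|x-y\|$, written $J(L^j)$ for edges of length $L^j$. $\mathbb{P}_J$: each edge open independently with probability $1-\exp(-J(e))$. For $n\le m$, $\Lambda_{n,m}$ is the set of $n$-blocks contained in $\Lambda_m(0)$. For sets $A,B$ of $n$-blocks, $A\nsim B$ is the event that there is no open edge with one endpoint in a block of $A$ and the other in a block of $B$. *)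

(* Defs.v *)
From HB Require Import structures.
From mathcomp Require Import all_boot all_order all_algebra.
From mathcomp Require Import all_classical all_reals all_analysis.
Set Implicit Arguments. Unset Strict Implicit. Unset Printing Implicit Defensive.
Import Order.TTheory GRing.Theory Num.Theory.
Local Open Scope ring_scope.

(* The ball Lambda_N(0) of H^1_L: points are vectors x = (x_1,...,x_N) with
   coordinates in Z/LZ (represented by 'I_L); coordinate i+1 of the paper is
   stored at index i : 'I_N.  All coordinates > N are 0. *)
Definition pt (L N : nat) := {ffun 'I_N -> 'I_L}.

(* lvl x y = max { i : x_i <> y_i } (and 0 if x = y); ||x - y|| = L ^ lvl x y *)
Definition lvl (L N : nat) (x y : pt L N) : nat :=
  (\max_(i : 'I_N | x i != y i) i.+1)%N.

Definition ball (L N : nat) (n : nat) (x : pt L N) : {set pt L N} :=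
  [set y | (lvl x y <= n)%N].

Definition inLam (L N : nat) (m : nat) (x : pt L N) : bool :=
  [forall i : 'I_N, (m <= i)%N ==> (val (x i) == 0%N)].

(* Lambda_{n,m}: the set of n-blocks contained in Lambda_m(0) *)
Definition blocks (L N : nat) (n m : nat) : {set {set pt L N}} :=
  [set ball n x | x in [pred x : pt L N | inLam m x]].

Definition edge (L N : nat) := {e : {set pt L N} | #|e| == 2%N}.

Definition elvl (L N : nat) (e : edge L N) : nat :=
  (\max_(x in val e) \max_(y in val e) lvl x y)%N.

Definition not_conn (L N : nat) (A B : {set {set pt L N}})
  (w : {ffun edge L N -> bool}) : bool :=
  [forall e : edge L N, w e ==>
     ~~ [exists x in val e, exists y in val e,
           [&& x != y, x \in finset.cover A & y \in finset.cover B]]].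

Definition perc_prob (R : realType) (E : finType) (p : E -> R)
  (ev : pred {ffun E -> bool}) : R :=
  \sum_(w : {ffun E -> bool} | ev w) \prod_(e : E) (if w e then p e else 1 - p e).

(* P_J restricted to the edges of Lambda_N(0): the isometry-invariant kernel J
   is given by J j = J(L^j); an edge of length L^j is open with probability
   1 - exp(-J(L^j)). *)
Definition PJ (R : realType) (L N : nat) (J : nat -> R)
  (ev : pred {ffun edge L N -> bool}) : R :=
  perc_prob (fun e : edge L N => 1 - expR (- J (elvl e))) ev.

(* Main.v *)
Set Warnings "-all".
Require Import Defs.
From HB Require Import structures.
From mathcomp Require Import all_boot all_order all_algebra.
From mathcomp Require Import all_classical all_reals all_analysis.
From mathcomp Require Import ring lra.
Import Order.TTheory GRing.Theory Num.Theory.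
Local Open Scope ring_scope.
Set Implicit Arguments. Unset Strict Implicit.

Lemma card_fam (L N : nat) (F : 'I_N -> pred 'I_L) :
  #|[set y : pt L N | [forall i, y i \in F i]]| = (\prod_(i < N) #|F i|)%N.
Proof.
have -> : [set y : pt L N | [forall i, y i \in F i]] = [set y in family F].
  apply/setP => y; rewrite !finset.in_set.
  apply/forallP/(@familyP 'I_N (fun _ => 'I_L) (fun _ => predPredType 'I_L) F y) => //.
rewrite cardsE card_family foldrE big_map big_enum. by [].
Qed.

Lemma lvl_leP (L N : nat) (x y : pt L N) m :
  reflect (forall i : 'I_N, (m <= i)%N -> x i = y i) (lvl x y <= m)%N.
Proof.
apply: (iffP (@bigmax_leqP 'I_N (fun i => x i != y i) m (fun i => i.+1))) => H i.
- move=> hm; apply/eqP; apply: contraTT hm => ne; rewrite -ltnNge; exact: H ne.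
- move=> ne; rewrite ltnNge; apply/negP => hm; by rewrite (H i hm) eqxx in ne.
Qed.

Lemma lvlC (L N : nat) (x y : pt L N) : lvl x y = lvl y x.
Proof. by apply: eq_bigl => i; rewrite eq_sym. Qed.

Lemma lvl_xx (L N : nat) (x : pt L N) : lvl x x = 0%N.
Proof. by apply/eqP; rewrite -leqn0; apply/lvl_leP. Qed.

Lemma lvl_ultra (L N : nat) (x y z : pt L N) : (lvl x z <= maxn (lvl x y) (lvl y z))%N.
Proof.
move/lvl_leP: (leqnn (lvl x y)) => Hxy; move/lvl_leP: (leqnn (lvl y z)) => Hyz.
apply/lvl_leP => i; rewrite geq_max => /andP[h1 h2].
by rewrite (Hxy i h1) (Hyz i h2).
Qed.

Lemma lvl_leN (L N : nat) (x y : pt L N) : (lvl x y <= N)%N.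
Proof. by apply/lvl_leP => i; rewrite leqNgt ltn_ord. Qed.

Lemma lvl_gtP (L N : nat) (x y : pt L N) m :
  (m < lvl x y)%N -> exists i : 'I_N, (m <= i)%N /\ x i != y i.
Proof.
move=> h.
have : [exists i : 'I_N, (m <= i)%N && (x i != y i)].
  apply: contraTT h => /existsPn H.
  rewrite -leqNgt; apply/lvl_leP => i hi; move: (H i); rewrite hi /= => /negbNE/eqP //.
by case/existsP => i /andP[h1 h2]; exists i.
Qed.

Lemma card_ball (L N n : nat) (x : pt L N) : (n <= N)%N -> #|Defs.ball n x| = (L ^ n)%N.
Proof.
move=> nN.
have -> : Defs.ball n x = [set y : pt L N | [forall i, y i \in
     ((if (i < n)%N then predT else pred1 (x i)) : pred 'I_L)]].
  apply/setP => y; rewrite !finset.in_set; apply/lvl_leP/forallP => H i.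
  - case: ltnP => hi; first by [].
    by rewrite inE (H i hi).
  - move=> hi; move: (H i); rewrite ltnNge hi /= inE => /eqP -> //.
rewrite card_fam.
rewrite (eq_bigr (fun i : 'I_N => if (i < n)%N then L else 1%N)); last first.
  by move=> i _; case: ifP => _; rewrite ?card1 ?card_ord.
rewrite -big_mkcond /= -(big_ord_widen _ (fun _ => L) nN).
by rewrite prod_nat_const card_ord.
Qed.

Lemma card_lev (L N j : nat) (x : pt L N) : (1 <= j <= N)%N ->
  #|[set y : pt L N | lvl x y == j]| = (L ^ j.-1 * L.-1)%N.
Proof.
case: j => [|j] //= jN.
have jN' : (j < N)%N by [].
have -> : [set y : pt L N | lvl x y == j.+1] = [set y : pt L N | [forall i, y i \in
     ((if (i < j)%N then predT else if (i == j :> nat) then predC1 (x i) else pred1 (x i)) : pred 'I_L)]].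
  apply/setP => y; rewrite !finset.in_set; apply/idP/forallP.
  - rewrite eqn_leq => /andP[h1 h2] i.
    move/lvl_leP: h1 => H1.
    case: ltnP => hi; first by [].
    case: eqP => hij.
    + rewrite inE; apply/negP => /eqP e.
      move: h2; rewrite ltnNge => /negP; apply; apply/lvl_leP => i' hi'.
      case: (ltngtP i' j) => c.
      * by rewrite ltnNge hi' in c.
      * exact: H1.
      * have -> : i' = i by apply: val_inj; rewrite /= c hij.
        by rewrite e.
    + rewrite inE; apply/eqP; apply/esym/H1.
      by rewrite ltn_neqAle hi andbT eq_sym; apply/eqP.
  - move=> H; rewrite eqn_leq; apply/andP; split.
    + apply/lvl_leP => i hi; move: (H i).
      rewrite ltnNge (leq_trans (leqnSn j) hi) /= ifN; last by rewrite neq_ltn hi orbT.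
      by rewrite inE => /eqP ->.
    + rewrite ltnNge; apply/negP => /lvl_leP H2.
      move: (H (Ordinal jN')); rewrite /= ltnn eqxx /= inE (H2 (Ordinal jN')) //=.
      by rewrite eqxx.
rewrite card_fam.
rewrite (eq_bigr (fun i : 'I_N => if (i < j)%N then L else if (i == j :> nat) then L.-1 else 1%N)); last first.
  by move=> i _; case: ifP => _; [|case: ifP => _]; rewrite ?card1 ?cardC1 ?card_ord.
have -> : (\prod_(i < N) (if (i < j)%N then L else if (i == j :> nat) then L.-1 else 1%N)
   = \prod_(i < N | (i < j.+1)%N) (if (i < j)%N then L else if (i == j :> nat) then L.-1 else 1%N))%N.
  rewrite [RHS]big_mkcond; apply: eq_bigr => i _.
  case: (ltnP i j.+1) => // hi.
  by rewrite ltnNge (leq_trans (leqnSn j) hi) /= ifN // neq_ltn hi orbT.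
rewrite -(big_ord_widen _ (fun i => if (i < j)%N then L else if (i == j :> nat) then L.-1 else 1%N) jN).
rewrite big_ord_recr /= ltnn eqxx.
rewrite (eq_bigr (fun _ => L)); last by move=> i _; rewrite ltn_ord.
by rewrite prod_nat_const card_ord.
Qed.

Definition mkedge (L N : nat) (e0 : edge L N) (x y : pt L N) : edge L N :=
  insubd e0 [set x; y].

Lemma val_mkedge (L N : nat) (e0 : edge L N) (x y : pt L N) :
  x != y -> val (mkedge e0 x y) = [set x; y].
Proof. by move=> xy; rewrite val_insubd cards2 xy. Qed.

Lemma elvl_mkedge (L N : nat) (e0 : edge L N) (x y : pt L N) :
  x != y -> elvl (mkedge e0 x y) = lvl x y.
Proof.
move=> xy; rewrite /elvl val_mkedge //.
apply/eqP; rewrite eqn_leq; apply/andP; split.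
- apply/bigmax_leqP => u; rewrite !inE => /orP[]/eqP->;
  apply/bigmax_leqP => v; rewrite !inE => /orP[]/eqP->; by rewrite ?lvl_xx // lvlC.
- apply: (leq_trans _ (@leq_bigmax_cond _ (fun u => u \in [set x; y]) (fun u => \max_(v in [set x; y]) lvl u v) x _)); last by rewrite !inE eqxx.
  apply: (@leq_bigmax_cond _ (fun v => v \in [set x; y]) (fun v => lvl x v) y); by rewrite !inE eqxx orbT.
Qed.

Lemma perc_le (R : realType) (E : finType) (p : E -> R) (ev : pred {ffun E -> bool}) (S : {set E}) :
 (forall e, 0 <= p e <= 1) -> (forall w, ev w -> forall e, e \in S -> ~~ w e) ->
 perc_prob p ev <= \prod_(e in S) (1 - p e).
Proof.
move=> hp hev.
pose G e (b : bool) := if b then (if e \in S then 0 else p e) else 1 - p e.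
have G0 : forall e b, 0 <= G e b.
  move=> e [] /=; rewrite /G; case/andP: (hp e) => h0 h1.
  - by case: ifP.
  - by rewrite subr_ge0.
rewrite /perc_prob.
apply: (@le_trans _ _ (\sum_(w : {ffun E -> bool}) \prod_e G e (w e))).
  rewrite [X in _ <= X](bigID ev) /= -[X in X <= _]addr0; apply: lerD.
    rewrite le_eqVlt; apply/orP; left; apply/eqP; apply: eq_bigr => w hw; apply: eq_bigr => e _; rewrite /G.
    by case E1: (w e) => //; case E2: (e \in S) => //; move: (hev w hw e E2); rewrite E1.
  apply: sumr_ge0 => w _; apply: prodr_ge0 => e _; exact: G0.
rewrite -(bigA_distr_bigA (fun e b => G e b)) /=.
rewrite [X in _ <= X]big_mkcond /=; rewrite le_eqVlt; apply/orP; left; apply/eqP; apply: eq_bigr => e _.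
rewrite big_bool /= /G; case: (e \in S) => /=; first by rewrite add0r.
by rewrite addrC subrK.
Qed.

Lemma ball_inLam (L N n m : nat) (x0 y : pt L N) :
  inLam m x0 -> (n <= m)%N -> y \in Defs.ball n x0 -> inLam m y.
Proof.
move=> hx nm; rewrite finset.in_set => /lvl_leP H.
apply/forallP => i; apply/implyP => hi.
rewrite -(H i (leq_trans nm hi)); exact: (implyP (forallP hx i) hi).
Qed.

Lemma inLam_lvl (L N m : nat) (x y : pt L N) :
  inLam m x -> inLam m y -> (lvl x y <= m)%N.
Proof.
move=> hx hy; apply/lvl_leP => i hi; apply: val_inj.
by rewrite (eqP (implyP (forallP hx i) hi)) (eqP (implyP (forallP hy i) hi)).
Qed.

Lemma ball_sub (L N n : nat) (a b y : pt L N) :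
  y \in Defs.ball n a -> y \in Defs.ball n b -> Defs.ball n a \subset Defs.ball n b.
Proof.
rewrite !finset.in_set => ha hb; apply/fintype.subsetP => z; rewrite !finset.in_set => hz.
apply: (leq_trans (lvl_ultra b y z)); rewrite geq_max hb /=.
apply: (leq_trans (lvl_ultra y a z)); by rewrite geq_max hz lvlC ha.
Qed.

Lemma ball_eq (L N n : nat) (a b y : pt L N) :
  y \in Defs.ball n a -> y \in Defs.ball n b -> Defs.ball n a = Defs.ball n b.
Proof.
move=> ha hb; apply/eqP; rewrite finset.eqEsubset; apply/andP; split; [exact: (ball_sub ha hb) | exact: (ball_sub hb ha)].
Qed.

Lemma triv_blocks (L N n m : nat) : finset.trivIset (blocks L N n m).
Proof.
apply/finset.trivIsetP => B1 B2 /imsetP[x1 _ ->] /imsetP[x2 _ ->] ne.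
apply/pred0P => y /=; apply/negP => /andP[h1 h2]; by move: ne; rewrite (ball_eq h1 h2) eqxx.
Qed.

Lemma card_cover (L N n m : nat) (A : {set {set pt L N}}) :
  A \subset blocks L N n m -> (n <= N)%N -> #|finset.cover A| = (#|A| * L ^ n)%N.
Proof.
move=> hA nN.
have tA := trivIsetS hA (triv_blocks L N n m).
rewrite -(eqP tA) -sum_nat_const; apply: eq_bigr => B hB.
by case/imsetP: (fintype.subsetP hA B hB) => x _ ->; rewrite card_ball.
Qed.

Lemma cover_inLam (L N n m : nat) (A : {set {set pt L N}}) (x : pt L N) :
  A \subset blocks L N n m -> (n <= m)%N -> x \in finset.cover A -> inLam m x.
Proof.
move=> hA nm /bigcupP[B hB hx].
case/imsetP: (fintype.subsetP hA B hB) => x0 hx0 e; subst B.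
exact: (ball_inLam hx0 nm hx).
Qed.

Lemma in_coverB (L N n m : nat) (x y : pt L N) :
  inLam m x -> (m < lvl x y)%N -> (n <= m)%N ->
  y \in finset.cover (blocks L N n N :\: blocks L N n m).
Proof.
move=> hx hlt nm.
have yy : y \in Defs.ball n y by rewrite finset.in_set lvl_xx.
apply/bigcupP; exists (Defs.ball n y) => //.
rewrite finset.in_setD; apply/andP; split.
- apply/negP => /imsetP[z hz e].
  have hy : inLam m y by apply: (ball_inLam hz nm); rewrite -e.
  by move: (inLam_lvl hx hy); rewrite leqNgt hlt.
- apply/imsetP; exists y => //; rewrite inE.
  by apply/forallP => i; apply/implyP; rewrite leqNgt ltn_ord.
Qed.

Lemma sum_subset_le (R : numDomainType) (I : finType) (A B : {set I}) (F : I -> R) :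
  A \subset B -> (forall i, i \in B -> 0 <= F i) ->
  \sum_(i in A) F i <= \sum_(i in B) F i.
Proof.
move=> sAB F0; rewrite [X in _ <= X](@big_setID _ _ _ _ B A F) /=.
rewrite (finset.setIidPr sAB) lerDl; apply: sumr_ge0 => i.
by rewrite finset.in_setD => /andP[_ hi]; exact: F0.
Qed.

Lemma lev_sum (R : realType) (L N m : nat) (x : pt L N) (f : nat -> R) :
  \sum_(y : pt L N | (m < lvl x y)%N) f (lvl x y)
  = \sum_(j < N.+1 | (m < j)%N) ((L ^ j.-1 * L.-1)%N%:R * f j).
Proof.
rewrite (partition_big (fun y => inord (lvl x y) : 'I_N.+1) (fun j : 'I_N.+1 => (m < j)%N)) /=; last first.
  by move=> y hy; rewrite inordK // ltnS lvl_leN.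
apply: eq_bigr => j hj.
have j1 : (1 <= j <= N)%N by rewrite (leq_ltn_trans (leq0n m) hj) /= -ltnS ltn_ord.
rewrite -(card_lev x j1) mulr_natl -sumr_const.
apply: eq_big => y.
- rewrite finset.in_set -val_eqE /= inordK ?ltnS ?lvl_leN //.
  by case: (lvl x y =P j) => [->|_]; rewrite ?hj ?andbF.
- by case/andP => _; rewrite -val_eqE /= inordK ?ltnS ?lvl_leN // => /eqP ->.
Qed.

Lemma geom (R : realType) (L m d : nat) : (0 < L)%N ->
  \sum_(j < (m + d).+1 | (m < j)%N)
     ((L ^ j.-1 * L.-1)%N%:R * ((L%:R : R) ^- (2 * j) * L%:R))
  = (L%:R : R) ^- m - (L%:R : R) ^- (m + d).
Proof.
move=> L0.
have l0 : (L%:R : R) != 0 by rewrite pnatr_eq0 -lt0n.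
elim: d => [|d IH].
  rewrite big1 ?addn0 ?subrr // => j hj.
  by move: (ltn_ord j); rewrite ?addn0 ltnS leqNgt hj.
rewrite big_mkcond big_ord_recr /= -big_mkcond /=.
have -> : \sum_(i < (m + d.+1) | (m < i)%N) ((L ^ i.-1 * L.-1)%N%:R * ((L%:R : R) ^- (2 * i) * L%:R))
   = \sum_(i < (m + d).+1 | (m < i)%N) ((L ^ i.-1 * L.-1)%N%:R * ((L%:R : R) ^- (2 * i) * L%:R)).
  by rewrite addnS.
rewrite IH addnS ltnS leq_addr /=.
rewrite natrM natrX.
have -> : (L.-1)%:R = (L%:R : R) - 1 by rewrite -subn1 natrB.
rewrite mulnC exprM !exprSr.
set q := (L%:R : R) ^+ (m + d).
have q0 : q != 0 by rewrite expf_neq0.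
field.
by rewrite q0 l0 expf_neq0.
Qed.

Lemma geom' (R : realType) (L m N : nat) : (0 < L)%N -> (m <= N)%N ->
  \sum_(j < N.+1 | (m < j)%N)
     ((L ^ j.-1 * L.-1)%N%:R * ((L%:R : R) ^- (2 * j) * L%:R))
  = (L%:R : R) ^- m - (L%:R : R) ^- N.
Proof. by move=> L0 h; have := geom R m (N - m) L0; rewrite subnKC. Qed.

Lemma le_of_eq (R : numDomainType) (x y : R) : x = y -> x <= y.
Proof. by move->. Qed.

Lemma key (R : realType) (L N n m : nat) (A : {set {set pt L N}}) (J : nat -> R) (c : R) :
  (1 < L)%N -> (0 < N)%N -> (n <= m)%N -> (m <= N)%N ->
  (forall j, 0 <= J j) ->
  (forall j, (m < j)%N -> c * ((L%:R : R) ^- (2 * j) * L%:R) <= J j) ->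
  A \subset blocks L N n m ->
  #|finset.cover A|%:R * (c * ((L%:R : R) ^- m - (L%:R : R) ^- N)) <=
  \sum_(e in [set e : edge L N | [exists x in val e, exists y in val e,
        [&& x != y, x \in finset.cover A & y \in finset.cover (blocks L N n N :\: blocks L N n m)]]]) J (elvl e).
Proof.
move=> L1 N0 nm mN J0 HJ hA.
set cA := finset.cover A. set cB := finset.cover _. set S := [set e : edge L N | _].
have L0 : (0 < L)%N by apply: ltnW.
pose p0 : pt L N := [ffun _ => Ordinal L0].
pose p1 : pt L N := [ffun _ => Ordinal L1].
have p01 : p0 != p1.
  apply/negP => /eqP e; have := congr1 (fun f : pt L N => val (f (Ordinal N0))) e; by rewrite /= !ffunE.
have e0P : #|[set p0; p1]| == 2%N by rewrite cards2 p01.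
pose e0 : edge L N := exist _ [set p0; p1] e0P.
pose Pset := [set q : pt L N * pt L N | (q.1 \in cA) && (m < lvl q.1 q.2)%N].
pose phi (q : pt L N * pt L N) := mkedge e0 q.1 q.2.
have hIn : forall x, x \in cA -> inLam m x by move=> x; apply: cover_inLam hA nm.
have qne : forall q, q \in Pset -> q.1 != q.2.
  move=> q; rewrite finset.in_set => /andP[_ h]; apply/negP => /eqP e; by rewrite e lvl_xx in h.
have q2B : forall q, q \in Pset -> q.2 \in cB.
  move=> q; rewrite finset.in_set => /andP[h1 h2]; exact: (in_coverB (hIn _ h1) h2 nm).
have q2nA : forall q, q \in Pset -> q.2 \notin cA.
  move=> q; rewrite finset.in_set => /andP[h1 h2]; apply/negP => h3.
  by move: (inLam_lvl (hIn _ h1) (hIn _ h3)); rewrite leqNgt h2.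
have phiS : phi @: Pset \subset S.
  apply/fintype.subsetP => e /imsetP[q hq ->]; rewrite finset.in_set.
  apply/existsP; exists q.1; rewrite /phi val_mkedge ?qne // !inE eqxx /=.
  apply/existsP; exists q.2; rewrite !inE eqxx orbT qne //= q2B // andbT.
  by move: hq; rewrite finset.in_set => /andP[].
have phi_inj : {in Pset &, injective phi}.
  move=> q r hq hr e; have := congr1 val e; rewrite /phi !val_mkedge ?qne // => E2.
  have h1 : q.1 \in [set r.1; r.2] by rewrite -E2 !inE eqxx.
  have e1 : q.1 = r.1.
    move: h1; rewrite !inE => /orP[/eqP //|/eqP e'].
    by move: hq (q2nA r hr); rewrite finset.in_set -e' => /andP[-> _].
  have h2 : q.2 \in [set r.1; r.2] by rewrite -E2 !inE eqxx orbT.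
  have e2 : q.2 = r.2.
    move: h2; rewrite !inE => /orP[/eqP e'|/eqP //].
    by move: (qne q hq); rewrite e1 e' eqxx.
  by case: q r {hq hr e E2 h1 h2} e1 e2 => [? ?] [? ?] /= -> ->.
apply: le_trans (sum_subset_le phiS (fun e _ => J0 _)).
rewrite big_imset //=.
rewrite (eq_bigr (fun q => J (lvl q.1 q.2))); last first.
  by move=> q hq; rewrite /phi elvl_mkedge ?qne.
rewrite (eq_bigl (fun q => (q.1 \in cA) && (m < lvl q.1 q.2)%N)); last by move=> q; rewrite finset.in_set.
rewrite -(pair_big_dep (fun x => x \in cA) (fun x y => (m < lvl x y)%N) (fun x y => J (lvl x y))) /=.
rewrite mulr_natl -sumr_const; apply: ler_sum => x hx.
apply: (le_trans _ (ler_sum _ (fun y hy => HJ (lvl x y) hy))).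
rewrite (@lev_sum R L N m x (fun j => c * ((L%:R : R) ^- (2 * j) * L%:R))) -(geom' R L0 mN) mulr_sumr; apply: le_of_eq; apply: eq_bigr => j _.
by rewrite mulrCA.
Qed.

Lemma perc_conn (R : realType) (L N : nat) (J : nat -> R) (A B : {set {set pt L N}}) :
  (forall j, 0 <= J j) ->
  PJ J (not_conn A B) <= expR (- \sum_(e in [set e : edge L N | [exists x in val e, exists y in val e,
        [&& x != y, x \in finset.cover A & y \in finset.cover B]]]) J (elvl e)).
Proof.
move=> J0; rewrite /PJ.
set S := [set e : edge L N | _].
apply: (le_trans (@perc_le R _ _ _ S _ _)).
- move=> e; have h1 := expR_ge0 (- J (elvl e)).
  have h2 : expR (- J (elvl e)) <= 1 by rewrite expR_le1 oppr_le0.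
  apply/andP; split; lra.
- move=> w hw e; rewrite finset.in_set => he; apply/negP => we.
  by move/forallP: hw => /(_ e); rewrite we /= he.
- rewrite -sumrN expR_sum; apply: le_of_eq; apply: eq_bigr => e _.
  by rewrite opprB addrCA subrr addr0.
Qed.

Unset Implicit Arguments.
Set Strict Implicit.

Theorem lemma5p5 (R : realType) (L : nat) (a delta : R) (n : nat) (J : nat -> R) :
  (2 <= L)%N -> 0 < a -> 0 < delta -> (1 <= n)%N ->
  (forall j : nat, 0 <= J j) ->
  (forall j : nat, (n <= j)%N ->
     (a + delta) * L%:R * ln (j%:R) * (L%:R ^- (2 * j)) <= J j) ->
  forall (k : nat), a <= (a + delta) * (1 - L%:R ^- k) ->
  forall (A : {set {set pt L (n + 2 * k)}}) (gamma : R),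
    A \subset blocks L (n + 2 * k) n (n + k) ->
    #|A|%:R = gamma * L%:R ^+ k ->
    PJ J (not_conn A (blocks L (n + 2 * k) n (n + 2 * k) :\: blocks L (n + 2 * k) n (n + k)))
      <= powR (n%:R) (- (gamma * a)).
Proof.
move=> L2 a0 d0 n1 J0 HJ k hk A gamma hA hcard.
have L0 : (0 < L)%N by apply: ltnW.
have l0 : (L%:R : R) != 0 by rewrite pnatr_eq0 -lt0n.
have lpos : (0 : R) < L%:R by rewrite ltr0n.
pose c := (a + delta) * ln (n%:R : R).
have lnn0 : 0 <= ln (n%:R : R) by apply: ln_ge0; rewrite ler1n.
have HJ' : forall j, (n + k < j)%N -> c * ((L%:R : R) ^- (2 * j) * L%:R) <= J j.
  move=> j hj.
  have nj : (n <= j)%N by apply: ltnW (leq_ltn_trans (leq_addr k n) hj).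
  apply: le_trans (HJ j nj).
  have lnj : ln (n%:R : R) <= ln (j%:R : R).
    rewrite ler_ln ?posrE ?ltr0n ?ler_nat //; exact: (leq_trans n1 nj).
  rewrite [X in X <= _](_ : _ = (a + delta) * L%:R * ln (n%:R : R) * (L%:R : R) ^- (2 * j)); last first.
    by rewrite /c; ring.
  apply: ler_wpM2r; first by rewrite invr_ge0 exprn_ge0 // ltW.
  apply: ler_wpM2l => //; apply: mulr_ge0; apply: ltW => //; exact: addr_gt0.
have N0 : (0 < n + 2 * k)%N by apply: (leq_trans n1 (leq_addr _ _)).
have mN : (n + k <= n + 2 * k)%N by rewrite leq_add2l mul2n -addnn leq_addr.
have K := key L2 N0 (leq_addr k n) mN J0 HJ' hA.
rewrite (card_cover hA (leq_trans (leq_addr k n) mN)) in K.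
apply: le_trans (perc_conn _ _ J0) _.
rewrite /powR ifN; last by rewrite pnatr_eq0 -lt0n.
rewrite ler_expR mulNr lerN2.
apply: le_trans K.
rewrite natrM hcard natrX mul2n -addnn !exprD.
set u := (L%:R : R) ^+ n. set v := (L%:R : R) ^+ k.
have u0 : u != 0 by rewrite expf_neq0.
have v0 : v != 0 by rewrite expf_neq0.
have vpos : 0 < v by rewrite exprn_gt0.
have g0 : 0 <= gamma by rewrite -(pmulr_lge0 _ vpos) -hcard ler0n.
rewrite [X in _ <= X](_ : _ = gamma * ln (n%:R : R) * ((a + delta) * (1 - v^-1))); last first.
  rewrite /c; field; by rewrite u0 v0.
rewrite [X in X <= _](_ : _ = gamma * ln (n%:R : R) * a); last by ring.
apply: ler_wpM2l; first exact: mulr_ge0.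
exact: hk.
Qed.
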